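(* For every $\delta>0$ there is $\kappa>0$ with the following property. Let $\varepsilon\in(0,1)$, let $a,b\in\mathbb{R}^d$ with $a\ne b$, and let $P_{ab}$ be a monotone polygonal $ab$-path. For $\alpha\in[0,\pi/2]$ let $F(\alpha)$ be the set of edges $e$ of $P_{ab}$ with $\angle(ab,e)\ge\alpha$, and $\|F(\alpha)\|$ their total length. If $\|F(i\sqrt{\varepsilon\kappa})\|\le\|P_{ab}\|/i^{2+\delta}$ for all integers $i\in\{1,\dots,\lceil(\pi/2)/\sqrt{\varepsilon\kappa}\rceil\}$, then $\|P_{ab}\|\le(1+\varepsilon)\|ab\|$.
   Context: An $ab$-path $(v_0=a,v_1,\dots,v_m=b)$ is monotone if $(v_i-v_{i-1})\cdot(b-a)\ge 0$ for all $i$ (equivalently, it crosses every hyperplane orthogonal to $ab$ at most once). For undirected segments $e_1,e_2$ with unit direction vectors $\pm\vec u_1,\pm\vec u_2$, $\angle(e_1,e_2)=\arccos|\vec u_1\cdot\vec u_2|$. *)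

(* Defs.v *)
From mathcomp Require Import all_boot all_order all_algebra.
From mathcomp Require Import all_classical all_reals all_analysis.
Set Implicit Arguments. Unset Strict Implicit. Unset Printing Implicit Defensive.
Import Order.TTheory GRing.Theory Num.Theory.
Local Open Scope ring_scope.

Section Defs.
Variables (R : realType) (d : nat).
Implicit Types (u v a b : 'rV[R]_d).

Definition dotp u v : R := \sum_(i < d) u 0 i * v 0 i.
Definition enorm u : R := Num.sqrt (dotp u u).

(* A polygonal path is given by its starting vertex a and the list s of
   the remaining vertices (v_1,...,v_m); its edges are the consecutive pairs. *)
Definition edges a (s : seq 'rV[R]_d) : seq ('rV[R]_d * 'rV[R]_d) :=
  zip (belast a s) s.

Definition seglen (e : 'rV[R]_d * 'rV[R]_d) : R := enorm (e.2 - e.1).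

Definition is_path a b (s : seq 'rV[R]_d) : Prop := last a s = b.

Definition monotone_path a b (s : seq 'rV[R]_d) : Prop :=
  is_path a b s /\ all (fun e => 0 <= dotp (e.2 - e.1) (b - a)) (edges a s).

(* angle between undirected segments: arccos |u1 . u2| with unit directions *)
Definition seg_angle (e1 e2 : 'rV[R]_d * 'rV[R]_d) : R :=
  let w1 := e1.2 - e1.1 in let w2 := e2.2 - e2.1 in
  acos (`|dotp w1 w2| / (enorm w1 * enorm w2)).

Definition path_len a (s : seq 'rV[R]_d) : R :=
  \sum_(e <- edges a s) seglen e.

Definition F_len a b (s : seq 'rV[R]_d) (alpha : R) : R :=
  \sum_(e <- edges a s | alpha <= seg_angle (a, b) e) seglen e.

End Defs.

(* Main.v *)
Require Import Defs.
From mathcomp Require Import all_boot all_order all_algebra.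
From mathcomp Require Import all_classical all_reals all_analysis.
From mathcomp Require Import ring lra zify.
Import Order.TTheory GRing.Theory Num.Theory.
Import numFieldNormedType.Exports.
Local Open Scope ring_scope.
Set Implicit Arguments. Unset Strict Implicit.

Section Aux.
Variables (R : realType) (d : nat).
Implicit Types (u v w : 'rV[R]_d).

Lemma dotpC u v : dotp u v = dotp v u.
Proof. by rewrite /dotp; apply: eq_bigr => i _; rewrite mulrC. Qed.

Lemma dotpDl u v w : dotp (u + v) w = dotp u w + dotp v w.
Proof. by rewrite /dotp -big_split; apply: eq_bigr => i _; rewrite !mxE mulrDl. Qed.

Lemma dotpNl u w : dotp (- u) w = - dotp u w.
Proof. by rewrite /dotp -sumrN; apply: eq_bigr => i _; rewrite !mxE mulNr. Qed.

Lemma dotpBl u v w : dotp (u - v) w = dotp u w - dotp v w.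
Proof. by rewrite dotpDl dotpNl. Qed.

Lemma dotpZl (k : R) u w : dotp (k *: u) w = k * dotp u w.
Proof. by rewrite /dotp mulr_sumr; apply: eq_bigr => i _; rewrite !mxE mulrA. Qed.

Lemma dotpp_ge0 u : 0 <= dotp u u.
Proof. by rewrite /dotp sumr_ge0 // => i _; rewrite -expr2 sqr_ge0. Qed.

Lemma dotpp_eq0 u v : dotp v v = 0 -> dotp u v = 0.
Proof.
move=> h; rewrite /dotp big1 // => i _.
have : v 0 i * v 0 i = 0.
  move: h; rewrite /dotp => /eqP; rewrite psumr_eq0; last first.
    by move=> j _; rewrite -expr2 sqr_ge0.
  by move=> /allP /(_ i (mem_index_enum _)) /eqP.
by move/eqP; rewrite mulf_eq0 orbb => /eqP ->; rewrite mulr0.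
Qed.

Lemma CS2 u v : dotp u v ^+ 2 <= dotp u u * dotp v v.
Proof.
have [B0|Bpos] := eqVneq (dotp v v) 0.
  by rewrite (dotpp_eq0 u B0) B0 mulr0 expr0n.
have hB : 0 < dotp v v by rewrite lt_def Bpos dotpp_ge0.
set A := dotp u u; set B := dotp v v; set C := dotp u v.
have h := dotpp_ge0 (B *: u - C *: v).
rewrite !dotpBl !(dotpC _ (B *: u - C *: v)) !dotpBl !dotpZl !(dotpC _ (_ *: _)) !dotpZl in h.
rewrite -/A -/B -/C (dotpC v u) -/C in h.
have : 0 <= B * (A * B - C ^+ 2) by move: h; rewrite -subr_ge0; nra.
by rewrite pmulr_rge0 // subr_ge0.
Qed.

Lemma CS u v : `|dotp u v| <= enorm u * enorm v.
Proof.
rewrite /enorm -sqrtrM ?dotpp_ge0 // -(sqrtr_sqr (dotp u v)).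
by rewrite ler_sqrt ?CS2 // mulr_ge0 ?dotpp_ge0.
Qed.

Lemma enorm_ge0 u : 0 <= enorm u.
Proof. exact: sqrtr_ge0. Qed.

Lemma enorm_sq u : enorm u ^+ 2 = dotp u u.
Proof. by rewrite /enorm sqr_sqrtr ?dotpp_ge0. Qed.

End Aux.
Section Geo.
Variables (R : realType) (d : nat).
Implicit Types (u v w : 'rV[R]_d).

Lemma dotpp_eq0_vec u : dotp u u = 0 -> u = 0.
Proof.
move=> h; apply/rowP => i; rewrite mxE.
have : u 0 i * u 0 i = 0.
  move: h; rewrite /dotp => /eqP; rewrite psumr_eq0; last first.
    by move=> j _; rewrite -expr2 sqr_ge0.
  by move=> /allP /(_ i (mem_index_enum _)) /eqP.
by move/eqP; rewrite mulf_eq0 orbb => /eqP.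
Qed.

Lemma edges_cons a x (s : seq 'rV[R]_d) : edges a (x :: s) = (a, x) :: edges x s.
Proof. by []. Qed.

Lemma telescope_dotp a (s : seq 'rV[R]_d) w :
  \sum_(e <- edges a s) dotp (e.2 - e.1) w = dotp (last a s - a) w.
Proof.
elim: s a => [|x s IH] a.
  by rewrite /edges /= big_nil dotpBl subrr.
rewrite edges_cons big_cons IH /= !dotpBl; ring.
Qed.

Lemma edge_facts a b (e : 'rV[R]_d * 'rV[R]_d) :
  0 < enorm (b - a) -> 0 <= dotp (e.2 - e.1) (b - a) ->
  seglen e * cos (seg_angle (a, b) e) * enorm (b - a) = dotp (e.2 - e.1) (b - a)
  /\ 0 <= seg_angle (a, b) e <= pi / 2.
Proof.
move=> D0 dot0.
rewrite /seg_angle /seglen /=.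
set D := enorm (b - a); set w := e.2 - e.1; set l := enorm w.
have hcs := CS (b - a) w.
rewrite -/D -/l dotpC ger0_norm // in hcs *.
have l0 : 0 <= l by apply: enorm_ge0.
have [le0|lpos] := eqVneq l 0.
  have dz : dotp w (b - a) = 0 by apply/eqP; rewrite eq_le dot0 andbT; move: hcs; rewrite le0 mulr0.
  rewrite le0 dz mul0r mulr0 invr0 mulr0 acos0 !mul0r; split => //.
  by rewrite divr_ge0 ?pi_ge0 // lexx.
have lp : 0 < l by rewrite lt_def lpos l0.
have DL : 0 < D * l by rewrite mulr_gt0.
set x := dotp w (b - a) / (D * l).
have x0 : 0 <= x by rewrite divr_ge0 // ltW.
have x1 : x <= 1 by rewrite ler_pdivrMr // mul1r.
have xi : x \in `[-1, 1] by rewrite in_itv /=; apply/andP; split => //; lra.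
have cx := acosK xi.
split.
  rewrite cx /x; field; rewrite ?gt_eqF //.
have h1 : -1 <= x <= 1 by apply/andP; split => //; lra.
rewrite acos_ge0 //=.
rewrite leNgt; apply/negP => hlt.
have p2 : (pi / 2 : R) \in `[0, pi] by rewrite in_itv /= divr_ge0 ?pi_ge0 //= ler_pdivrMr // ler_peMr ?pi_ge0 // ler1n.
have pa : acos x \in `[0, pi] by rewrite in_itv /= acos_ge0 // acos_lepi.
have := hlt; rewrite -(ltr_cos p2 pa) cos_pihalf cx.
by rewrite ltNge x0.
Qed.
End Geo.
Section T.
Variable R : realType.
Lemma sin_le (x : R) : 0 <= x -> sin x <= x.
Proof.
move=> x0.
have [|c _ h] := @MVT_segment _ sin cos _ _ x0 (fun y _ => is_derive_sin y).
  exact/continuous_subspaceT/continuous_sin.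
move: h; rewrite sin0 subr0 subr0 => ->.
by rewrite -[leRHS]mul1r ler_wpM2r ?cos_le1.
Qed.
Lemma one_minus_cos (x : R) : 0 <= x -> 1 - cos x <= x ^+ 2.
Proof.
move=> x0.
have [|c /andP[c0 cx] h] := @MVT_segment _ cos (fun y => - sin y) _ _ x0 (fun y _ => is_derive_cos y).
  exact/continuous_subspaceT/continuous_cos.
have e : 1 - cos x = sin c * x by rewrite -cos0 -opprB h subr0 mulNr opprK.
rewrite e expr2 ler_wpM2r //.
rewrite bnd_simp in c0 cx.
exact: le_trans (sin_le c0) cx.
Qed.
End T.
Section T.
Variable R : realType.

Lemma powR_step (de a : R) : 0 < de -> 0 < a ->
  de * ((a + 1) `^ (1 + de))^-1 <= (a `^ de)^-1 - ((a + 1) `^ de)^-1.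
Proof.
move=> d0 a0.
have a1 : a <= a + 1 by lra.
have [| |c /andP[c0 c1] h] := @MVT_segment _ (fun x : R => x `^ (- de)) (fun x : R => (- de) * x `^ (- de - 1)) _ _ a1.
- move=> x; rewrite in_itv /= => /andP[ax _].
  exact: is_derive1_powR (lt_trans a0 ax).
- apply/continuous_in_subspaceT => x; rewrite inE /= in_itv /= => /andP[ax _].
  apply: differentiable_continuous; apply/derivable1_diffP.
  by apply: derivable_powR; rewrite in_itv /= andbT (lt_le_trans a0 ax).
rewrite !bnd_simp in c0 c1.
have cpos := lt_le_trans a0 c0.
rewrite !powRN in h.
have -> : (a `^ de)^-1 - ((a + 1) `^ de)^-1 = de * c `^ (- de - 1).
  by rewrite -opprB h addrAC subrr add0r mulr1 mulNr opprK.
rewrite ler_pM2l //.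
have -> : - de - 1 = - (1 + de) by ring.
rewrite powRN lef_pV2 ?posrE ?powR_gt0 //; last by lra.
apply: ge0_ler_powR; rewrite ?nnegrE; rewrite ?bnd_simp in c1; lra.
Qed.
End T.
Section T2.
Variable R : realType.
Lemma psum_aux (de : R) n : 0 < de ->
  \sum_(1 <= j < n.+2) ((j%:R : R) `^ (1 + de))^-1
    <= 1 + de^-1 - de^-1 * ((n.+1%:R : R) `^ de)^-1.
Proof.
move=> d0; elim: n => [|n IH].
  rewrite big_nat1 !powR1 invr1 mulr1 addrK. done.
rewrite big_nat_recr //=.
have hs := @powR_step R de (n.+1%:R) d0 (ltr0Sn _ _).
have e : (n.+2%:R : R) = n.+1%:R + 1 by rewrite natr1.
rewrite e.
set A := ((n.+1%:R : R) `^ de)^-1 in IH hs *.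
set B := (((n.+1)%:R + 1 : R) `^ de)^-1 in hs *.
set C := (((n.+1)%:R + 1 : R) `^ (1 + de))^-1 in hs *.
have hd : 0 < de^-1 by rewrite invr_gt0.
have : C <= de^-1 * (A - B).
  by rewrite -(ler_pM2l d0) mulrA divff ?mul1r // gt_eqF.
rewrite mulrBr; move: IH; set S := \sum_(_ <= _ < _) _. lra.
Qed.

Lemma psum (de : R) n : 0 < de ->
  \sum_(1 <= j < n.+1) ((j%:R : R) `^ (1 + de))^-1 <= 1 + de^-1.
Proof.
move=> d0; case: n => [|n].
  by rewrite big_geq // addr_ge0 // invr_ge0 ltW.
apply: le_trans (psum_aux n d0) _.
by rewrite lerBlDr lerDl mulr_ge0 // ?invr_ge0 ?powR_ge0 // ltW.
Qed.
End T2.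
Section T3.
Variable R : realType.
Lemma sum_odd m : \sum_(1 <= j < m.+1) ((2 * j + 1)%:R : R) = (m.+1%:R) ^+ 2 - 1.
Proof.
elim: m => [|m IH]; first by rewrite big_geq // expr1n subrr.
rewrite big_nat_recr //= IH.
have -> : (m.+2%:R : R) = m.+1%:R + 1 by rewrite natr1.
rewrite natrD natrM -natr1; ring.
Qed.

Lemma weight (t th : R) n : 0 < t -> 0 <= th -> th < (n.+1)%:R * t ->
  th ^+ 2 <= t ^+ 2 * (1 + \sum_(1 <= j < n.+1 | j%:R * t <= th) (2 * j + 1)%:R).
Proof.
move=> t0 th0; elim: n => [|n IH] hlt.
  rewrite big_geq // addr0 mulr1.
  move: hlt; rewrite mul1r => hlt.
  nra.
have hs : 0 <= ((2 * n.+1 + 1)%:R : R) by [].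
rewrite big_mkcond big_nat_recr //= -big_mkcond /=.
have [hn|hn] := ltP th (n.+1%:R * t).
  apply: le_trans (IH hn) _.
  rewrite ler_wpM2l ?sqr_ge0 // lerD2l lerDl.
  by case: (_ <= th).
have -> : \sum_(1 <= j < n.+1 | j%:R * t <= th) ((2 * j + 1)%:R : R)
          = \sum_(1 <= j < n.+1) (2 * j + 1)%:R.
  rewrite [LHS]big_nat_cond [RHS]big_nat_cond; apply: eq_bigl => j.
  case: (boolP (1 <= j < n.+1)%N) => //= /andP[_ jn].
  apply/idP; apply: (le_trans _ hn); rewrite ler_pM2r // ler_nat; lia.
rewrite sum_odd.
have e : (1 + ((n.+1%:R : R) ^+ 2 - 1 + (2 * n.+1 + 1)%:R)) = n.+2%:R ^+ 2.
  have -> : (n.+2%:R : R) = n.+1%:R + 1 by rewrite natr1.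
  rewrite natrD natrM; ring.
rewrite e -exprMn mulrC.
have hp : 0 <= n.+2%:R * t :> R by rewrite mulr_ge0 // ltW.
nra.
Qed.
End T3.

Section Exch.
Variable R : realType.
Lemma exch_sum (T : Type) (r : seq T) (r' : seq nat) (l : T -> R)
  (P : nat -> T -> bool) (W : nat -> R) :
  \sum_(e <- r) l e * (1 + \sum_(j <- r' | P j e) W j)
  = \sum_(e <- r) l e + \sum_(j <- r') W j * \sum_(e <- r | P j e) l e.
Proof.
under eq_bigr do rewrite mulrDr mulr1.
rewrite big_split /=; congr (_ + _).
under eq_bigr do rewrite mulr_sumr big_mkcond /=.
rewrite exchange_big /=.
under [RHS]eq_bigr do rewrite mulr_sumr big_mkcond /=.
apply: eq_bigr => j _; apply: eq_bigr => e _.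
by case: (P j e); rewrite ?mulr0 // mulrC.
Qed.
End Exch.

Theorem lemma3 (R : realType) (d : nat) (delta : R) (hdelta : 0 < delta) :
  exists kappa : R, 0 < kappa /\
    forall (eps : R) (a b : 'rV[R]_d) (s : seq 'rV[R]_d),
      0 < eps -> eps < 1 -> a != b ->
      monotone_path a b s ->
      (forall i : nat, (1 <= i)%N ->
         (i%:Z <= Num.ceil ((pi / 2) / Num.sqrt (eps * kappa)))%R ->
         F_len a b s (i%:R * Num.sqrt (eps * kappa))
           <= path_len a s / powR (i%:R) (2 + delta)) ->
      path_len a s <= (1 + eps) * enorm (b - a).
Proof.
have C0 : 0 < 4 + 3 * delta^-1 :> R.
  by rewrite addr_gt0 // mulr_gt0 // invr_gt0.
exists (2 * (4 + 3 * delta^-1))^-1; split.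
  by rewrite invr_gt0 mulr_gt0.
move=> eps a b s e0 e1 ab [hpath hmono] hF.
set C := 4 + 3 * delta^-1 in C0 hF *.
set t := Num.sqrt (eps * (2 * C)^-1) in hF *.
have k0 : 0 < eps * (2 * C)^-1 by rewrite mulr_gt0 // invr_gt0 mulr_gt0.
have t0 : 0 < t by rewrite sqrtr_gt0.
have t2 : t ^+ 2 = eps * (2 * C)^-1 by rewrite sqr_sqrtr // ltW.
set D := enorm (b - a).
have D0 : 0 < D.
  rewrite sqrtr_gt0 lt_def dotpp_ge0 andbT; apply/eqP => /dotpp_eq0_vec /eqP.
  by rewrite subr_eq0 eq_sym (negbTE ab).
set L := path_len a s.
have hall : forall e, e \in edges a s -> 0 <= dotp (e.2 - e.1) (b - a).
  by move=> e he; apply: (allP hmono e he).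
set th := fun e => seg_angle (a, b) e.
have sumcos : \sum_(e <- edges a s) seglen e * cos (th e) = D.
  have h : D * \sum_(e <- edges a s) seglen e * cos (th e) = D * D.
    rewrite -expr2 /D enorm_sq -{2}hpath -telescope_dotp mulr_sumr.
    rewrite big_seq [RHS]big_seq; apply: eq_bigr => e he.
    have [h _] := edge_facts D0 (hall e he).
    by rewrite -h mulrC.
  exact: (mulfI (lt0r_neq0 D0) h).
set n := `|Num.ceil ((pi / 2) / t)|%N.
have hceil0 : 0 <= Num.ceil ((pi / 2) / t :> R).
  rewrite ceil_ge0; apply: (@lt_trans _ _ 0); first by rewrite ltrN10.
  by rewrite divr_gt0 // divr_gt0 // pi_gt0.
have hnZ : (n%:R : R) = (Num.ceil ((pi / 2) / t))%:~R by rewrite natr_absz ger0_norm.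
have hn : (pi / 2 : R) <= n%:R * t.
  by rewrite hnZ -ler_pdivrMr // ceil_ge.
have hth : forall e, e \in edges a s -> 0 <= th e /\ th e < n.+1%:R * t.
  move=> e he; have [_ /andP[h1 h2]] := edge_facts D0 (hall e he).
  split => //; apply: (le_lt_trans h2); apply: (le_lt_trans hn).
  by rewrite ltr_pM2r // ltr_nat.
have hLD : L - D <= t ^+ 2 * (L + \sum_(1 <= j < n.+1)
            ((2 * j + 1)%:R : R) * F_len a b s (j%:R * t)).
  rewrite -sumcos /L /path_len -sumrB.
  apply: (@le_trans _ _ (\sum_(e <- edges a s) seglen e *
     (t ^+ 2 * (1 + \sum_(1 <= j < n.+1 | j%:R * t <= th e) ((2 * j + 1)%:R : R))))).
    rewrite big_seq [X in _ <= X]big_seq; apply: ler_sum => e he.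
    rewrite -{1}[seglen e]mulr1 -mulrBr ler_wpM2l ?enorm_ge0 //.
    have [h0 h1] := hth e he.
    exact: le_trans (one_minus_cos h0) (weight t0 h0 h1).
  rewrite -[X in _ <= X]mulr1 -[X in _ <= X]mulrA mulr1 /F_len.
  under eq_bigr do rewrite mulrCA.
  by rewrite -mulr_sumr exch_sum.
have hsum : \sum_(1 <= j < n.+1) ((2 * j + 1)%:R : R) * F_len a b s (j%:R * t)
            <= 3 * L * (1 + delta^-1).
  have L0 : 0 <= L by rewrite /L /path_len sumr_ge0 // => e _; apply: enorm_ge0.
  apply: (@le_trans _ _ (\sum_(1 <= j < n.+1) 3 * L * ((j%:R : R) `^ (1 + delta))^-1)).
    apply: ler_sum_nat => j /andP[j1 jn].
    have hj := hF j j1.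
    have jn' : (j%:Z <= Num.ceil ((pi / 2) / t))%R.
      by rewrite -(gez0_abs hceil0) lez_nat -/n; rewrite ltnS in jn.
    have hj' := hj jn'.
    have jpos : (0 : R) < j%:R by rewrite ltr0n.
    have P0 : 0 < (j%:R : R) `^ (1 + delta) by rewrite powR_gt0.
    have e2 : (j%:R : R) `^ (2 + delta) = j%:R * (j%:R : R) `^ (1 + delta).
      rewrite (_ : 2 + delta = 1 + (1 + delta)); last by ring.
      by rewrite powRD ?powRr1 ?ltW // (lt0r_neq0 jpos) implybT.
    rewrite e2 in hj'.
    apply: (le_trans (ler_wpM2l _ hj')) => //.
    have W3 : ((2 * j + 1)%:R : R) <= 3 * j%:R.
      by rewrite -natrM ler_nat; clear -j1; lia.
    rewrite -/L.
    set P := (j%:R : R) `^ (1 + delta) in P0 *.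
    have -> : ((2 * j + 1)%:R : R) * (L / (j%:R * P)) = ((2 * j + 1)%:R / j%:R) * (L / P).
      by rewrite invfM; ring.
    rewrite -[3 * L / P]mulrA; apply: ler_wpM2r; first by rewrite divr_ge0 // ltW.
    by rewrite ler_pdivrMr.
  rewrite -mulr_sumr ler_wpM2l ?mulr_ge0 //.
  exact: psum.
have L0 : 0 <= L by rewrite /L /path_len sumr_ge0 // => e _; apply: enorm_ge0.
have key : L - D <= eps / 2 * L.
  apply: (le_trans hLD).
  apply: (@le_trans _ _ (t ^+ 2 * (L + 3 * L * (1 + delta^-1)))).
    by rewrite ler_wpM2l ?sqr_ge0 // lerD2l.
  rewrite t2 (_ : L + 3 * L * (1 + delta^-1) = C * L); last by rewrite /C; ring.
  have CC : C != 0 by exact: lt0r_neq0.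
  have -> : eps / (2 * C) * (C * L) = eps / 2 * L by field.
  by [].
have hD : L * (1 - eps / 2) <= D by move: key; lra.
have h1e : 0 <= 1 + eps by lra.
apply: (le_trans _ (ler_wpM2l h1e hD)).
have h3 : 0 <= L * (eps * (1 - eps)) by rewrite mulr_ge0 // mulr_ge0 // ?subr_ge0 ltW.
move: h3; lra.
Qed.
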